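(* Let $(G,k)$ be an instance and let $u,v$ be adjacent large-dense vertices, neither incident to a multi-edge, with $N(u)\cup\{u\}=N(v)\cup\{v\}$. Then every minimum-size feasible solution $X$ satisfies either $\{u,v\}\subseteq X$ or $\{u,v\}\cap X=\emptyset$.
   Context: Graphs are undirected, without self-loops, possibly with multi-edges. $N(v)$ is the set of vertices adjacent to $v$; $\rho(v)$ is the number of unordered pairs $\{u_1,u_2\}\subseteq N(v)$ joined by at least one edge. A vertex $v$ is large-dense if $|N(v)|>7k$ and $\rho(v)> |N(v)|(|N(v)|-1)/4$. A vertex set induces a clique if between any two distinct vertices there is exactly one edge, and a tree if it is connected and acyclic (two parallel edges form a cycle). A feasible solution is $X\subseteq V$, $|X|\le k$, with every component of $G-X$ a clique or a tree. *)

(* Defs.v *)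
From mathcomp Require Import all_boot.
Set Implicit Arguments. Unset Strict Implicit. Unset Printing Implicit Defensive.

(* A finite multigraph on vertex type T is given by an edge-multiplicity
   function m : T -> T -> nat, m x y = number of edges between x and y.
   It must be symmetric and loopless (see [multigraph]). *)
Section Multigraph.
Variable T : finType.
Variable m : T -> T -> nat.

Definition multigraph : Prop := (forall x y, m x y = m y x) /\ (forall x, m x x = 0).

Definition adj : rel T := fun x y => 0 < m x y.

Definition nbh (v : T) : {set T} := [set u | adj v u].

Definition rho (v : T) : nat :=
  #|[set p : T * T | [&& p.1 \in nbh v, p.2 \in nbh v, enum_rank p.1 < enum_rank p.2
                        & adj p.1 p.2]]|.

Definition large_dense (k : nat) (v : T) : Prop :=
  7 * k < #|nbh v| /\ #|nbh v| * (#|nbh v| - 1) < 4 * rho v.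

Definition adj_in (S : {set T}) : rel T :=
  fun x y => [&& x \in S, y \in S & adj x y].

Definition induces_clique (S : {set T}) : Prop :=
  forall x y, x \in S -> y \in S -> x != y -> m x y = 1.

(* a cycle in G[S]: either two parallel edges, or a simple cycle of length >= 3 *)
Definition acyclic_in (S : {set T}) : Prop :=
  (forall x y, x \in S -> y \in S -> m x y <= 1) /\
  (forall s : seq T, 3 <= size s -> uniq s -> all (mem S) s -> ~~ cycle (adj_in S) s).

Definition connected_in (S : {set T}) : Prop :=
  forall x y, x \in S -> y \in S -> connect (adj_in S) x y.

Definition induces_tree (S : {set T}) : Prop := connected_in S /\ acyclic_in S.

Definition component (X : {set T}) (x : T) : {set T} :=
  [set y | connect (adj_in (~: X)) x y].

Definition feasible (k : nat) (X : {set T}) : Prop :=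
  #|X| <= k /\
  forall x, x \notin X ->
    induces_clique (component X x) \/ induces_tree (component X x).

Definition min_feasible (k : nat) (X : {set T}) : Prop :=
  feasible k X /\ forall Y : {set T}, feasible k Y -> #|X| <= #|Y|.

End Multigraph.

(* Main.v *)
Require Import Defs.
From mathcomp Require Import all_boot.
From mathcomp Require Import zify.

Lemma connect_closed (T : finType) (e : rel T) (P : pred T) :
  (forall x y, P x -> e x y -> P y) -> forall x y, P x -> connect e x y -> P y.
Proof.
move=> H x y Px /connectP [p]; elim: p x Px => [|z p IH] x Px /=.
  by move=> _ ->.
by move=> /andP [exz pz] ey; exact: (IH z (H _ _ Px exz) pz ey).
Qed.

Lemma connect_mono_in (T : finType) (e1 e2 : rel T) (P : pred T) :
  (forall x y, P x -> e1 x y -> P y) ->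
  (forall x y, P x -> e1 x y -> e2 x y) ->
  forall x y, P x -> connect e1 x y -> connect e2 x y.
Proof.
move=> H H2 x y Px /connectP [p]; elim: p x Px => [|z p IH] x Px /=.
  by move=> _ ->.
move=> /andP [exz pz] ey.
apply: (connect_trans (connect1 (H2 _ _ Px exz))).
exact: (IH z (H _ _ Px exz) pz ey).
Qed.

Arguments connect_closed {T e P} H {x y}.
Arguments connect_mono_in {T e1 e2 P}.

Lemma key (T : finType) (m : T -> T -> nat) (k : nat) (u v : T) (X : {set T}) :
  multigraph m -> adj m u v -> large_dense m k v -> (forall w, m u w <= 1) ->
  u |: nbh m u = v |: nbh m v -> min_feasible m k X -> u \in X -> v \notin X -> False.
Proof.
move=> [msym mirr] huv [hd hrho] hu1 hN [[hX hfeas] hmin] uX vX.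
have adjS : forall a b, adj m a b -> adj m b a by move=> a b; rewrite /adj msym.
set C := component m X v.
have CnX : forall z, z \in C -> z \notin X.
  move=> z; rewrite inE => hz.
  apply: (@connect_closed _ _ (fun z => z \notin X) _ _ _ vX hz).
  by move=> a b _; rewrite /adj_in => /and3P [_ hb _]; rewrite inE in hb.
have vC : v \in C by rewrite inE connect0.
have nbC : forall w, adj m v w -> w \notin X -> w \in C.
  move=> w hvw wX; rewrite inE; apply: connect1; rewrite /adj_in !inE vX wX.
  exact: hvw.
have stepC : forall z w, z \in C -> w \notin X -> adj m z w -> w \in C.
  move=> z w zC wX hzw; move: (zC); rewrite !inE => hz.
  apply: (connect_trans hz); apply: connect1.
  by rewrite /adj_in !inE (CnX _ zC) wX hzw.
have Cclique : induces_clique m C.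
  case: (hfeas v vX) => // [[_ [_ hcyc]]]; exfalso.
  set d := #|nbh m v| in hd hrho.
  have hin : forall a b, a \in nbh m v -> b \in nbh m v ->
      enum_rank a < enum_rank b -> adj m a b -> (a \in X) || (b \in X).
    move=> a b ha hb hab hadj; apply/negPn/negP; rewrite negb_or => /andP [aX bX].
    rewrite !inE in ha hb.
    have aC := nbC _ ha aX; have bC := nbC _ hb bX.
    have hva : v != a by apply/eqP => e; move: ha; rewrite -e /adj mirr.
    have hvb : v != b by apply/eqP => e; move: hb; rewrite -e /adj mirr.
    have hab' : a != b by apply/eqP => e; move: hab; rewrite e ltnn.
    have hu : uniq [:: v; a; b] by rewrite /= !inE negb_or hva hvb hab'.
    have hall : all (mem C) [:: v; a; b] by rewrite /= vC aC bC.
    have := hcyc [:: v; a; b] isT hu hall.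
    by rewrite /= /adj_in vC aC bC ha hadj (adjS _ _ hb).
  pose f := fun p : T * T => if p.1 \in X then p else (p.2, p.1).
  have hr : rho m v <= k * d.
    rewrite /rho.
    set P := [set p : T * T | _].
    have finj : {in P &, injective f}.
      move=> [a b] [a' b']; rewrite !inE /= /f /=.
      move=> /and4P [_ _ h1 _] /and4P [_ _ h2 _].
      case: (a \in X); case: (a' \in X) => //= -[e1 e2].
      - by move: h2; rewrite -e1 -e2 ltnNge (ltnW h1).
      - by move: h2; rewrite -e1 -e2 ltnNge (ltnW h1).
      - by rewrite e1 e2.
    rewrite -(card_in_imset finj).
    apply: (leq_trans (subset_leq_card (B := setX X (nbh m v)) _)).
      apply/subsetP => q /imsetP [[a b]]; rewrite inE /= => /and4P [ha hb hab hadj] ->.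
      have := hin a b ha hb hab hadj.
      rewrite /f /=; case: (boolP (a \in X)) => aX /=.
        by rewrite inE /= aX hb.
      by move=> bX; rewrite inE /= bX ha.
    by rewrite cardsX leq_mul2r hX orbT.
  nia.
have hUC : forall b, b \in C -> b != u -> m u b = 1.
  move=> b bC bu; apply/eqP; rewrite eqn_leq hu1 /=.
  have hb : b \in v |: nbh m v.
    rewrite in_setU1; case: (eqVneq b v) => //= bv.
    by rewrite inE /adj /= (Cclique v b vC bC) // eq_sym.
  move: hb; rewrite -hN !inE (negbTE bu) /=; done.
set Y := X :\ u.
set D := u |: C.
have nbu : forall w, adj m u w -> w \in v |: nbh m v.
  by move=> w h; rewrite -hN !inE h orbT.
have closD : forall z w, z \in D -> adj_in m (~: Y) z w -> w \in D.
  move=> z w zD; rewrite /adj_in => /and3P [_ wY hzw].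
  rewrite in_setC in_setD1 negb_and negbK in wY.
  rewrite in_setU1; case: (eqVneq w u) => //= wu.
  rewrite (negbTE wu) /= in wY.
  move: zD; rewrite in_setU1 => /orP [/eqP zu|zC].
    have := nbu w; rewrite -zu => /(_ hzw); rewrite in_setU1 => /orP [/eqP ->|hvw].
      exact: vC.
    by rewrite inE in hvw; exact: nbC.
  exact: stepC zC wY hzw.
have closND : forall z w, z \notin D -> adj_in m (~: Y) z w -> w \notin D.
  move=> z w zD; rewrite /adj_in => /and3P [zY wY hzw].
  apply/negP => wD.
  have zu : z != u by apply/eqP => e; move: zD; rewrite e in_setU1 eqxx.
  rewrite in_setC in_setD1 zu /= in zY.
  rewrite in_setU1 negb_or in zD; case/andP: zD => _ zC.
  move: wD; rewrite in_setU1 => /orP [/eqP wu|wC].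
    have := nbu z; rewrite -wu => /(_ (adjS _ _ hzw)); rewrite in_setU1 => /orP [/eqP e|hvz].
      by move: zC; rewrite e vC.
    by rewrite inE in hvz; move: zC; rewrite (nbC _ hvz zY).
  by move: zC; rewrite (stepC w z wC zY (adjS _ _ hzw)).
have hY : feasible m k Y.
  split.
    have := cardsD1 u X; rewrite uX add1n -/Y; lia.
  move=> x xY.
  case: (boolP (x \in D)) => xD.
    left => a b ha hb hab.
    move: ha hb; rewrite !inE => ha hb.
    have aD := connect_closed closD xD ha.
    have bD := connect_closed closD xD hb.
    move: aD bD; rewrite !in_setU1 => /orP [/eqP au|aC] /orP [/eqP bu|bC].
    - by move: hab; rewrite au bu eqxx.
    - by rewrite au; apply: hUC => //; rewrite -au eq_sym.
    - by rewrite bu msym; apply: hUC => //; rewrite -bu.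
    - exact: Cclique.
  have xu : x != u by apply/eqP => e; move: xD; rewrite e in_setU1 eqxx.
  have xX : x \notin X by move: xY; rewrite !inE xu.
  have -> : component m Y x = component m X x.
    apply/setP => y; rewrite !inE; apply/idP/idP.
      apply: (@connect_mono_in _ _ _ (fun z => z \notin D)) => // z w zD hzw.
      have wD := closND _ _ zD hzw.
      move: hzw; rewrite /adj_in => /and3P [zY wY ->].
      have zu : z != u by apply/eqP => e; move: zD; rewrite e in_setU1 eqxx.
      have wu : w != u by apply/eqP => e; move: wD; rewrite e in_setU1 eqxx.
      by move: zY wY; rewrite !inE zu wu /= => -> ->.
    apply: (@connect_mono_in _ _ _ predT) => // z w _.
    rewrite /adj_in !inE => /and3P [zX wX hzw]; rewrite (negbTE zX) (negbTE wX) hzw !andbF //.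
  exact: hfeas.
have := hmin _ hY; have := cardsD1 u X; rewrite uX add1n -/Y.
have : 0 < #|X| by apply/card_gt0P; exists u.
lia.
Qed.

Theorem mainTheorem14 (T : finType) (m : T -> T -> nat) (k : nat) (u v : T) :
  multigraph m ->
  adj m u v ->
  large_dense m k u -> large_dense m k v ->
  (forall w, m u w <= 1) -> (forall w, m v w <= 1) ->
  u |: nbh m u = v |: nbh m v ->
  forall X : {set T}, min_feasible m k X ->
    [set u; v] \subset X \/ [disjoint [set u; v] & X].
Proof.
move=> hm huv hu hv hu1 hv1 hN X hX.
have hvu : adj m v u by move: huv; rewrite /adj (proj1 hm).
case: (boolP (u \in X)) => uX; case: (boolP (v \in X)) => vX.
- by left; apply/subsetP => x; rewrite !inE => /orP [] /eqP ->.
- by exfalso; apply: (key _ _ _ _ _ _ hm huv hv hu1 hN hX uX vX).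
- by exfalso; apply: (key _ _ _ _ _ _ hm hvu hu hv1 (esym hN) hX vX uX).
- right; rewrite disjoint_subset; apply/subsetP => x; rewrite !inE => /orP [] /eqP ->.
  + exact: uX.
  + exact: vX.
Qed.
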